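(* Let $d\ge2$ and $L\ge1$ be integers, and define for real $x\in[0,L-1]$ $$\rho(x)=\frac{\Gamma(L+d)\,\Gamma(L)}{\Gamma(L+d+x)\,\Gamma(L-x)}.$$ Then $0<\rho(x)\le \exp\!\left(-\frac{2x(x+d)}{2L+d}\right)$ for all $x\in[0,L-1]$. In particular, for integers $0\le k\le L-1$, $$\frac{(L-1+d)!\,(L-1)!}{(L-1+d+k)!\,(L-1-k)!}\le e^{-\frac{2k(k+d)}{2L+d}}.$$
   Context: $\Gamma$ is the Euler gamma function, $\Gamma(n)=(n-1)!$. *)

(* Defs.v *)
From Stdlib Require Import Reals Factorial.
From Coquelicot Require Import Coquelicot.
Open Scope R_scope.

(* Euler Gamma function, via Euler's integral
   Gamma(s) = \int_0^{+oo} t^(s-1) e^(-t) dt   (valid for s > 0;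
   all arguments used in the statement are >= 1). *)
Definition Gamma (s : R) : R :=
  RInt_gen (fun t => Rpower t (s - 1) * exp (- t))
           (at_right 0) (Rbar_locally p_infty).

Definition rho (d L : nat) (x : R) : R :=
  Gamma (INR L + INR d) * Gamma (INR L)
  / (Gamma (INR L + INR d + x) * Gamma (INR L - x)).

(* Main.v *)
Require Import Defs.
From Stdlib Require Import Reals Lra Lia Factorial Classical.
From Coquelicot Require Import Coquelicot.
Open Scope R_scope.

Definition gf (s t : R) : R := exp ((s-1) * ln t) * exp (- t).

Lemma Gamma_gf s : Gamma s = RInt_gen (gf s) (at_right 0) (Rbar_locally p_infty).
Proof. reflexivity. Qed.

Lemma gf_pos s t : 0 < gf s t.
Proof. unfold gf; apply Rmult_lt_0_compat; apply exp_pos. Qed.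

Lemma gf_der s t : 0 < t -> ex_derive (gf s) t.
Proof. intros; unfold gf; auto_derive; auto. Qed.

Lemma gf_cont s t : 0 < t -> continuous (gf s) t.
Proof. intros; apply (ex_derive_continuous (K:=R_AbsRing) (V:=R_NormedModule)), gf_der; auto. Qed.

Lemma ex_RInt_gf s u v : 0 < u -> 0 < v -> ex_RInt (gf s) u v.
Proof.
  intros; apply (ex_RInt_continuous (V:=R_CompleteNormedModule)); intros z Hz; apply gf_cont.
  apply Rlt_le_trans with (Rmin u v); [|lra]. apply Rmin_case; lra.
Qed.

Lemma ln_le_sub1 y : 0 < y -> ln y <= y - 1.
Proof.
  intros. assert (H1 := exp_ineq1_le (ln y)). rewrite exp_ln in H1; lra.
Qed.

Definition Kc (s : R) := exp ((s-1) * ln (2*s)).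

Lemma gf_bound s t : 1 <= s -> 0 < t -> gf s t <= Kc s * exp (- t / 2).
Proof.
  intros Hs Ht. unfold gf, Kc.
  assert (Hl : ln t <= ln (2*s) + t/(2*s) - 1).
  { replace (ln t) with (ln (2*s) + ln (t/(2*s))).
    - assert (H := ln_le_sub1 (t/(2*s))). assert (0 < t/(2*s)).
      { apply Rdiv_lt_0_compat; lra. } specialize (H H0); lra.
    - rewrite <- ln_mult; try lra. f_equal. field; lra.
      apply Rdiv_lt_0_compat; lra. }
  assert (Hk : (s-1) * ln t <= (s-1) * ln (2*s) + t/2).
  { apply Rle_trans with ((s-1) * (ln (2*s) + t/(2*s) - 1)).
    apply Rmult_le_compat_l; lra.
    assert ((s-1) * (t/(2*s)) <= t/2).
    { replace ((s-1)*(t/(2*s))) with (t/2 - t/(2*s)) by (field; lra).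
      assert (0 < t/(2*s)) by (apply Rdiv_lt_0_compat; lra). lra. }
    nra. }
  assert (H1 : exp ((s-1) * ln t) <= exp ((s - 1) * ln (2 * s)) * exp (t/2)).
  { rewrite <- exp_plus. destruct Hk as [Hk|Hk]; [left; apply exp_increasing; auto | rewrite Hk; lra]. }
  replace (- t / 2) with (t/2 + - t) by field.
  rewrite (exp_plus (t/2)), <- Rmult_assoc.
  apply Rmult_le_compat_r. left; apply exp_pos. exact H1.
Qed.

Lemma RInt_gf_bound s u v : 1 <= s -> 0 < u <= v -> RInt (gf s) u v <= 2 * Kc s.
Proof.
  intros Hs Huv.
  assert (HI : is_RInt (fun t => Kc s * exp (- t / 2)) u v
             ((- 2 * Kc s * exp (- v / 2)) - (- 2 * Kc s * exp (- u/2)))).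
  { apply (is_RInt_derive (fun t => - 2 * Kc s * exp (- t / 2))).
    - intros x _. auto_derive; auto. unfold Rdiv; field.
    - intros x _. apply (ex_derive_continuous (K:=R_AbsRing) (V:=R_NormedModule)). auto_derive; auto. }
  apply Rle_trans with (RInt (fun t => Kc s * exp (- t / 2)) u v).
  - apply RInt_le; try lra. apply ex_RInt_gf; lra. eexists; eauto.
    intros x Hx. apply gf_bound; lra.
  - rewrite (is_RInt_unique _ _ _ _ HI).
    assert (0 < Kc s) by apply exp_pos.
    assert (0 < exp (-v/2)) by apply exp_pos.
    assert (exp (-u/2) <= 1). { rewrite <- exp_0. destruct (Req_dec u 0); [lra|].
      left; apply exp_increasing; lra. }
    nra.
Qed.

Lemma Gamma_lub s : 1 <= s ->
  exists l, is_RInt_gen (gf s) (at_right 0) (Rbar_locally p_infty) l /\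
    (forall u v, 0 < u <= v -> RInt (gf s) u v <= l).
Proof.
  intros Hs.
  set (E := fun y => exists u v, 0 < u <= v /\ y = RInt (gf s) u v).
  assert (HB : bound E).
  { exists (2 * Kc s). intros y [u [v [Huv ->]]]. apply RInt_gf_bound; auto. }
  assert (HE : exists x, E x).
  { exists (RInt (gf s) 1 1). exists 1, 1. split; [lra|auto]. }
  destruct (completeness E HB HE) as [l [Hub Hlub]].
  exists l. split.
  2:{ intros u v Huv. apply Hub. exists u, v; auto. }
  intros P [eps HP].
  assert (Hy : exists y, E y /\ l - eps < y).
  { apply NNPP; intro Hn.
    assert (is_upper_bound E (l - eps)).
    { intros y Ey. apply Rnot_lt_le; intro; apply Hn; eauto. }
    specialize (Hlub _ H). destruct eps; simpl in *; lra. }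
  destruct Hy as [y [[u0 [v0 [Huv0 ->]]] Hy]].
  apply (Filter_prod _ _ _ (fun u => 0 < u < u0) (fun v => v0 < v)).
  - exists (mkposreal u0 (proj1 Huv0)). intros y Hb Hy0. split; auto.
    unfold ball in Hb; simpl in Hb; unfold AbsRing_ball, abs, minus, plus, opp in Hb; simpl in Hb.
    rewrite Rabs_right in Hb; lra.
  - exists v0. auto.
  - intros u v Hu Hv. simpl.
    exists (RInt (gf s) u v). split.
    + apply (RInt_correct (V:=R_CompleteNormedModule)), ex_RInt_gf; lra.
    + apply HP.
      assert (H1 : RInt (gf s) u v <= l) by (apply Hub; exists u, v; split; [lra|auto]).
      assert (H2 : RInt (gf s) u0 v0 <= RInt (gf s) u v).
      { rewrite <- (RInt_Chasles (gf s) u u0 v) by (apply ex_RInt_gf; lra).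
        rewrite <- (RInt_Chasles (gf s) u0 v0 v) by (apply ex_RInt_gf; lra).
        assert (0 <= RInt (gf s) u u0).
        { apply RInt_ge_0; [lra| apply ex_RInt_gf; lra| intros; left; apply gf_pos]. }
        assert (0 <= RInt (gf s) v0 v).
        { apply RInt_ge_0; [lra| apply ex_RInt_gf; lra| intros; left; apply gf_pos]. }
        unfold plus; simpl. lra. }
      unfold ball; simpl; unfold AbsRing_ball, abs, minus, plus, opp; simpl.
      apply Rabs_def1; lra.
Qed.

Lemma Gamma_spec s : 1 <= s ->
  is_RInt_gen (gf s) (at_right 0) (Rbar_locally p_infty) (Gamma s) /\ 0 < Gamma s.
Proof.
  intros Hs. destruct (Gamma_lub s Hs) as [l [Hl Hle]].
  assert (Hg : Gamma s = l).
  { rewrite Gamma_gf. apply is_RInt_gen_unique; auto. }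
  rewrite Hg. split; auto.
  apply Rlt_le_trans with (RInt (gf s) 1 2); [|apply Hle; lra].
  apply RInt_gt_0; [lra| intros; apply gf_pos| intros; apply gf_cont; lra].
Qed.

Definition hh (s t : R) : R := - (exp (s * ln t) * exp (- t)).

Lemma hh_der s t : 0 < t -> is_derive (hh s) t (gf (s+1) t - s * gf s t).
Proof.
  intros Ht. unfold hh, gf. auto_derive; auto.
  replace (s + 1 - 1) with s by ring.
  replace (exp ((s-1) * ln t)) with (exp (s * ln t) / t).
  - field; lra.
  - replace ((s-1) * ln t) with (s * ln t + - ln t) by ring.
    rewrite exp_plus, exp_Ropp, exp_ln; auto.
Qed.

Lemma ball0 (y eps : R) : Rabs y < eps -> ball 0 eps y.
Proof.
  intros H. unfold ball; simpl; unfold AbsRing_ball, abs, minus, plus, opp; simpl.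
  replace (y + - 0) with y by ring. auto.
Qed.

Lemma hh_lim0 s : 1 <= s -> filterlim (hh s) (at_right 0) (locally 0).
Proof.
  intros Hs. apply filterlim_locally. intros eps.
  assert (Hm : 0 < Rmin 1 eps) by (destruct eps; apply Rmin_case; simpl; lra).
  exists (mkposreal _ Hm). intros t Hb Ht.
  unfold ball in Hb; simpl in Hb; unfold AbsRing_ball, abs, minus, plus, opp in Hb; simpl in Hb.
  rewrite Rabs_right in Hb by lra.
  assert (Hm1 := Rmin_l 1 eps). assert (Hm2 := Rmin_r 1 eps).
  apply ball0. unfold hh. rewrite Rabs_Ropp, Rabs_right.
  2:{ left; apply Rmult_lt_0_compat; apply exp_pos. }
  assert (Hl : ln t < 0). { rewrite <- ln_1. apply ln_increasing; lra. }
  apply Rle_lt_trans with (exp (ln t) * 1).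
  - apply Rmult_le_compat; try (left; apply exp_pos).
    destruct (Req_dec s 1). subst; rewrite Rmult_1_l; lra.
    left; apply exp_increasing; nra.
    rewrite <- exp_0; destruct (Req_dec t 0); [lra|]. left; apply exp_increasing; lra.
  - rewrite exp_ln by lra. lra.
Qed.

Lemma hh_liminf s : 1 <= s -> filterlim (hh s) (Rbar_locally p_infty) (locally 0).
Proof.
  intros Hs. apply filterlim_locally. intros eps.
  set (K := Kc (s+1)). assert (HK : 0 < K) by apply exp_pos.
  exists (Rmax 1 (- 2 * ln (eps / K))). intros t Ht.
  assert (Ht1 := Rmax_l 1 (- 2 * ln (eps / K))). assert (Ht2 := Rmax_r 1 (- 2 * ln (eps / K))).
  apply ball0. unfold hh. rewrite Rabs_Ropp, Rabs_right.
  2:{ left; apply Rmult_lt_0_compat; apply exp_pos. }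
  assert (Hg := gf_bound (s+1) t ltac:(lra) ltac:(lra)). unfold gf in Hg.
  replace (s + 1 - 1) with s in Hg by ring. fold K in Hg.
  eapply Rle_lt_trans; [exact Hg|].
  assert (Hep : 0 < eps / K) by (destruct eps; simpl; apply Rdiv_lt_0_compat; lra).
  assert (exp (- t / 2) < eps / K).
  { rewrite <- (exp_ln (eps / K)) by auto. apply exp_increasing. lra. }
  replace (pos eps) with (K * (eps / K)) by (field; lra).
  apply Rmult_lt_compat_l; auto.
Qed.

Lemma Gamma_succ s : 1 <= s -> Gamma (s + 1) = s * Gamma s.
Proof.
  intros Hs. destruct (Gamma_spec s Hs) as [HG _].
  assert (Hpos : filter_prod (at_right 0) (Rbar_locally p_infty)
                   (fun ab => 0 < fst ab /\ 0 < snd ab)).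
  { apply (Filter_prod _ _ _ (fun u => 0 < u) (fun v => 0 < v)).
    - exists (mkposreal 1 Rlt_0_1). auto.
    - exists 0. auto.
    - simpl; auto. }
  assert (HD : is_RInt_gen (Derive (hh s)) (at_right 0) (Rbar_locally p_infty) (0 - 0)).
  { apply is_RInt_gen_Derive.
    - eapply filter_imp; [|exact Hpos]. intros [a b] [Ha Hb] x Hx; simpl in *.
      eexists; apply hh_der. apply Rlt_le_trans with (Rmin a b); [apply Rmin_case; lra| lra].
    - eapply filter_imp; [|exact Hpos]. intros [a b] [Ha Hb] x Hx; simpl in *.
      assert (Hx0 : 0 < x) by (apply Rlt_le_trans with (Rmin a b); [apply Rmin_case; lra| lra]).
      apply continuous_ext_loc with (fun t => gf (s+1) t - s * gf s t).
      + exists (mkposreal x Hx0). intros y Hy.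
        unfold ball in Hy; simpl in Hy; unfold AbsRing_ball, abs, minus, plus, opp in Hy; simpl in Hy.
        symmetry; apply is_derive_unique, hh_der. apply Rabs_def2 in Hy. lra.
      + apply (ex_derive_continuous (K:=R_AbsRing) (V:=R_NormedModule)).
        unfold gf; auto_derive; auto.
    - apply hh_lim0; auto.
    - apply hh_liminf; auto. }
  assert (HS := is_RInt_gen_scal _ s _ HG).
  assert (HP := is_RInt_gen_plus _ _ _ _ HD HS).
  rewrite Gamma_gf.
  replace (s * Gamma s) with (plus (0 - 0) (scal s (Gamma s)))
    by (unfold plus, scal; simpl; unfold mult; simpl; ring).
  apply is_RInt_gen_unique.
  eapply is_RInt_gen_ext; [|exact HP]. simpl.
  eapply filter_imp; [|exact Hpos]. intros [a b] [Ha Hb] x Hx; simpl in *.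
  assert (Hx0 : 0 < x) by (apply Rlt_le_trans with (Rmin a b); [apply Rmin_case; lra| lra]).
  rewrite (is_derive_unique _ _ _ (hh_der s x Hx0)).
  unfold plus, scal; simpl; unfold mult; simpl. ring.
Qed.

Lemma gf_mid m x t : 0 < t -> gf (m - x) t * gf (m + x) t = gf m t * gf m t.
Proof.
  intros. unfold gf.
  replace (gf m t) with (gf m t) by reflexivity.
  transitivity (exp ((m - x - 1) * ln t + - t + ((m + x - 1) * ln t + - t))).
  - rewrite !exp_plus. ring.
  - replace ((m - x - 1) * ln t + - t + ((m + x - 1) * ln t + - t))
      with ((m - 1) * ln t + - t + ((m - 1) * ln t + - t)) by ring.
    rewrite !exp_plus. ring.
Qed.

Lemma Gamma_mid m x : 0 <= x -> 1 <= m - x ->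
  Gamma m * Gamma m <= Gamma (m - x) * Gamma (m + x).
Proof.
  intros Hx Hm.
  destruct (Gamma_spec m ltac:(lra)) as [H0 P0].
  destruct (Gamma_spec (m - x) ltac:(lra)) as [H1 P1].
  destruct (Gamma_spec (m + x) ltac:(lra)) as [H2 P2].
  set (lam := Gamma m / Gamma (m - x)).
  assert (Hlam : 0 < lam) by (apply Rdiv_lt_0_compat; auto).
  assert (HS := is_RInt_gen_plus _ _ _ _
     (is_RInt_gen_scal _ (lam / 2) _ H1) (is_RInt_gen_scal _ (/ (2 * lam)) _ H2)).
  assert (Hpos : filter_prod (at_right 0) (Rbar_locally p_infty)
                   (fun ab => 0 < fst ab <= snd ab)).
  { apply (Filter_prod _ _ _ (fun u => 0 < u < 1) (fun v => 1 < v)).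
    - exists (mkposreal 1 Rlt_0_1). intros y Hb Hy; split; auto.
      unfold ball in Hb; simpl in Hb; unfold AbsRing_ball, abs, minus, plus, opp in Hb; simpl in Hb.
      apply Rabs_def2 in Hb. lra.
    - exists 1. auto.
    - simpl; intros; lra. }
  assert (Hle : norm (Gamma m) <= plus (scal (lam / 2) (Gamma (m - x)))
           (scal (/ (2 * lam)) (Gamma (m + x)))).
  { eapply (RInt_gen_norm (V:=R_CompleteNormedModule) (Fa:=at_right 0) (Fb:=Rbar_locally p_infty)); [| | exact H0 | exact HS].
    - eapply filter_imp; [|exact Hpos]. simpl; intros; lra.
    - eapply filter_imp; [|exact Hpos]. intros [a b] [Ha Hb] t Ht; simpl in *.
      assert (Ht0 : 0 < t) by lra.
      unfold norm, plus, scal; simpl; unfold abs, mult; simpl.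
      rewrite Rabs_right by (left; apply gf_pos).
      assert (E := gf_mid m x t Ht0).
      assert (Ga := gf_pos (m - x) t). assert (Gb := gf_pos (m + x) t). assert (Gm := gf_pos m t).
      set (A := lam / 2 * gf (m - x) t). set (B := / (2 * lam) * gf (m + x) t).
      assert (HAB : 4 * (A * B) = gf m t * gf m t).
      { unfold A, B. rewrite <- E. field. lra. }
      assert (0 < A) by (unfold A; apply Rmult_lt_0_compat; lra).
      assert (0 < B) by (unfold B; apply Rmult_lt_0_compat; [apply Rinv_0_lt_compat|]; lra).
      assert (Hsq : gf m t * gf m t <= (A + B) * (A + B)). { rewrite <- HAB. assert (0 <= (A - B) * (A - B)) by apply Rle_0_sqr. replace ((A + B) * (A + B)) with (4 * (A * B) + (A - B) * (A - B)) by ring. lra. }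
      apply Rnot_lt_le; intro Hc.
      assert ((A + B) * (A + B) < gf m t * gf m t) by (apply Rmult_le_0_lt_compat; lra).
      lra. }
  unfold norm, plus, scal in Hle; simpl in Hle; unfold abs, mult in Hle; simpl in Hle.
  rewrite Rabs_right in Hle by lra.
  unfold lam in Hle.
  assert (Gamma m <= Gamma m / 2 + Gamma (m - x) * Gamma (m + x) / (2 * Gamma m)).
  { eapply Rle_trans; [exact Hle|]. right. field. split; lra. }
  assert (Hq : Gamma m / 2 <= Gamma (m - x) * Gamma (m + x) / (2 * Gamma m)) by lra.
  apply Rmult_le_compat_r with (r := 2 * Gamma m) in Hq; [|lra].
  replace (Gamma (m - x) * Gamma (m + x) / (2 * Gamma m) * (2 * Gamma m))
    with (Gamma (m - x) * Gamma (m + x)) in Hq by (field; lra).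
  lra.
Qed.
Lemma cont_pt_of_der f x : ex_derive f x -> continuity_pt f x.
Proof.
  intros H. apply continuity_pt_filterlim.
  apply (ex_derive_continuous (K:=R_AbsRing) (V:=R_NormedModule)); auto.
Qed.

Lemma ln_ge u : 0 <= u -> 2 * u / (2 + u) <= ln (1 + u).
Proof.
  intros Hu. destruct (Req_dec u 0) as [->|Hu0].
  { replace (2*0/(2+0)) with 0 by field. rewrite Rplus_0_r, ln_1. lra. }
  set (k := fun y => ln (1 + y) - 2 * y / (2 + y)).
  destruct (MVT_gen k 0 u (fun y => / (1 + y) - 4 / ((2 + y) * (2 + y)))) as [c [Hc Hk]].
  - intros y Hy. rewrite Rmin_left in Hy by lra. rewrite Rmax_right in Hy by lra.
    unfold k. auto_derive. repeat split; lra. field. lra.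
  - intros y Hy. rewrite Rmin_left in Hy by lra. rewrite Rmax_right in Hy by lra.
    apply cont_pt_of_der. unfold k. auto_derive. repeat split; lra.
  - rewrite Rmin_left in Hc by lra. rewrite Rmax_right in Hc by lra.
    unfold k in Hk. rewrite Rplus_0_r, ln_1 in Hk.
    replace (2 * 0 / (2 + 0)) with 0 in Hk by field.
    assert (Hd : / (1 + c) - 4 / ((2 + c) * (2 + c)) = c * c / ((1 + c) * ((2 + c) * (2 + c)))).
    { field. lra. }
    rewrite Hd in Hk.
    assert (0 <= c * c / ((1 + c) * ((2 + c) * (2 + c)))).
    { apply Rdiv_le_0_compat. apply Rle_0_sqr. apply Rmult_lt_0_compat; [lra|]. nra. }
    assert (0 <= c * c / ((1 + c) * ((2 + c) * (2 + c))) * (u - 0)) by (apply Rmult_le_pos; lra).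
    lra.
Qed.

Lemma exp_le_frac c x : 0 < c -> 0 <= x -> c <= (c + x) * exp (- (2 * x / (2 * c + x))).
Proof.
  intros Hc Hx.
  assert (H := ln_ge (x / c) ltac:(apply Rdiv_le_0_compat; lra)).
  replace (2 * (x / c) / (2 + x / c)) with (2 * x / (2 * c + x)) in H by (field; lra).
  replace (1 + x / c) with ((c + x) / c) in H by (field; lra).
  assert (H2 : exp (2 * x / (2 * c + x)) <= (c + x) / c).
  { rewrite <- (exp_ln ((c + x) / c)) by (apply Rdiv_lt_0_compat; lra).
    destruct H as [H|H]; [left; apply exp_increasing; auto| rewrite H; lra]. }
  rewrite exp_Ropp. assert (0 < exp (2 * x / (2 * c + x))) by apply exp_pos.
  apply Rmult_le_reg_r with (exp (2 * x / (2 * c + x))); auto.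
  rewrite Rmult_assoc, Rinv_l by lra. rewrite Rmult_1_r.
  apply Rmult_le_compat_l with (r := c) in H2; [|lra].
  replace (c * ((c + x) / c)) with (c + x) in H2 by (field; lra). lra.
Qed.

Fixpoint P (s : R) (n : nat) : R :=
  match n with O => 1 | S n => P s n * (s + INR n) end.

Lemma P_pos s n : 0 < s -> 0 < P s n.
Proof.
  intros Hs; induction n; simpl; [lra|]. apply Rmult_lt_0_compat; auto.
  assert (0 <= INR n) by apply pos_INR. lra.
Qed.

Fixpoint S2 (b : R) (n : nat) : R :=
  match n with O => 0 | S n => S2 b n + / ((b + INR n) * (b + INR n)) end.

Fixpoint S1 (b x : R) (n : nat) : R :=
  match n with O => 0 | S n => S1 b x n + 2 * x / (2 * (b + INR n) + x) end.

Lemma L_N b x n : 0 <= x < b ->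
  P (b - x) n * P (b + x) n <= P b n * P b n * exp (- (x * x * S2 b n)).
Proof.
  intros Hx. induction n; simpl.
  - rewrite Rmult_0_r, Ropp_0, exp_0. lra.
  - assert (Hn := pos_INR n). set (c := b + INR n).
    assert (Hc : 0 < c) by (unfold c; lra).
    assert (Hf : (b - x + INR n) * (b + x + INR n) <= c * c * exp (- (x * x / (c * c)))).
    { assert (H1 := exp_ineq1_le (- (x * x / (c * c)))).
      replace ((b - x + INR n) * (b + x + INR n)) with (c * c * (1 + - (x * x / (c * c))))
        by (unfold c; field; lra).
      apply Rmult_le_compat_l; [nra|lra]. }
    replace (- (x * x * (S2 b n + / (c * c)))) with (- (x * x * S2 b n) + - (x * x / (c * c)))
      by (field; lra).
    rewrite exp_plus.
    assert (0 < P (b - x) n) by (apply P_pos; lra).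
    assert (0 < P (b + x) n) by (apply P_pos; lra).
    assert (0 <= (b - x + INR n) * (b + x + INR n)) by nra.
    replace (P (b - x) n * (b - x + INR n) * (P (b + x) n * (b + x + INR n)))
      with ((P (b - x) n * P (b + x) n) * ((b - x + INR n) * (b + x + INR n))) by ring.
    replace (P b n * c * (P b n * c) * (exp (- (x * x * S2 b n)) * exp (- (x * x / (c * c)))))
      with ((P b n * P b n * exp (- (x * x * S2 b n))) * (c * c * exp (- (x * x / (c * c))))) by ring.
    apply Rmult_le_compat; auto. apply Rmult_le_pos; lra.
Qed.

Lemma L_d b x n : 0 < b -> 0 <= x -> P b n <= P (b + x) n * exp (- S1 b x n).
Proof.
  intros Hb Hx. induction n; simpl.
  - rewrite Ropp_0, exp_0. lra.
  - assert (Hn := pos_INR n).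
    assert (H := exp_le_frac (b + INR n) x ltac:(lra) Hx).
    replace (- (S1 b x n + 2 * x / (2 * (b + INR n) + x)))
      with (- S1 b x n + - (2 * x / (2 * (b + INR n) + x))) by ring.
    rewrite exp_plus.
    replace (P (b + x) n * (b + x + INR n) * (exp (- S1 b x n) * exp (- (2 * x / (2 * (b + INR n) + x)))))
      with ((P (b + x) n * exp (- S1 b x n)) * ((b + INR n + x) * exp (- (2 * x / (2 * (b + INR n) + x))))) by ring.
    apply Rmult_le_compat; auto. left; apply P_pos; auto. lra.
Qed.

Lemma S2_ge b n : 0 < b -> / b - / (b + INR n) <= S2 b n.
Proof.
  intros Hb. induction n; cbn [S2].
  - simpl. rewrite Rplus_0_r. lra.
  - assert (Hn := pos_INR n). rewrite S_INR.
    assert (/ (b + INR n) - / (b + (INR n + 1)) <= / ((b + INR n) * (b + INR n))).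
    { replace (/ (b + INR n) - / (b + (INR n + 1))) with (/ ((b + INR n) * (b + INR n + 1))) by (field; lra).
      apply Rinv_le_contravar; nra. }
    lra.
Qed.

Lemma S1_ge b x m n : 0 < b -> 0 <= x -> 0 < m ->
  2 * x * (2 * INR n / m - (INR n * (2 * b + x) + INR n * (INR n - 1)) / (m * m)) <= S1 b x n.
Proof.
  intros Hb Hx Hm. induction n; cbn [S1].
  - simpl. replace (2 * x * (2 * 0 / m - (0 * (2 * b + x) + 0 * (0 - 1)) / (m * m))) with 0 by (field; lra). lra.
  - assert (Hn := pos_INR n). rewrite S_INR.
    set (y := 2 * (b + INR n) + x).
    assert (Hy : 0 < y) by (unfold y; lra).
    assert (H1 : 2 / m - y / (m * m) <= / y).
    { assert (Hq : / y - (2 / m - y / (m * m)) = (m - y) * (m - y) / (y * (m * m))) by (field; lra).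
      assert (0 <= (m - y) * (m - y) / (y * (m * m))).
      { apply Rdiv_le_0_compat; [apply Rle_0_sqr| apply Rmult_lt_0_compat; nra]. }
      lra. }
    replace (2 * x * (2 * (INR n + 1) / m - ((INR n + 1) * (2 * b + x) + (INR n + 1) * (INR n + 1 - 1)) / (m * m)))
      with (2 * x * (2 * INR n / m - (INR n * (2 * b + x) + INR n * (INR n - 1)) / (m * m))
            + 2 * x * (2 / m - y / (m * m))) by (unfold y; field; lra).
    replace (2 * x / y) with (2 * x * / y) by (unfold Rdiv; ring).
    apply Rplus_le_compat; auto. apply Rmult_le_compat_l; lra.
Qed.
Lemma final_ineq b dd x B : 1 <= b -> 2 <= dd -> 0 <= x <= b - 1 -> b * (3*b+dd) * (2*b+dd) <= B ->
  2 * x * (x + dd) / (2 * b + dd) <= x * x * (/ b - / B) + 2 * x * dd / (2 * b + x + dd - 1).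
Proof.
  intros Hb Hd Hx HB.
  set (m := 2 * b + x + dd - 1).
  assert (Hm : 0 < m) by (unfold m; lra).
  assert (HB0 : 0 < B).
  { apply Rlt_le_trans with (b * (3*b+dd) * (2*b+dd)); auto.
    apply Rmult_lt_0_compat; [apply Rmult_lt_0_compat|]; lra. }
  assert (Hid : x * x * (/ b - / B) + 2 * x * dd / m - 2 * x * (x + dd) / (2 * b + dd)
     = x * (dd * ((dd - 1) * x + x * x + 2 * b) * B - x * b * m * (2 * b + dd)) / (b * m * (2 * b + dd) * B)).
  { unfold m. field. repeat split; lra. }
  assert (Hnum : x * b * m * (2 * b + dd) <= dd * ((dd - 1) * x + x * x + 2 * b) * B).
  { assert (H1 : 4 * b * B <= dd * ((dd - 1) * x + x * x + 2 * b) * B).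
    { apply Rmult_le_compat_r; [lra|].
      assert (0 <= (dd - 1) * x + x * x) by nra.
      assert (0 <= dd * ((dd - 1) * x + x * x)) by (apply Rmult_le_pos; lra).
      nra. }
    assert (H3 : x * m * b * (2 * b + dd) <= 4 * b * (b * (3 * b + dd) * (2 * b + dd))).
    { assert (x * m <= b * (3*b + dd)).
      { apply Rmult_le_compat; unfold m; lra. }
      assert (0 <= x * m) by (apply Rmult_le_pos; lra).
      replace (4 * b * (b * (3 * b + dd) * (2 * b + dd))) with (4 * (b * (3*b+dd)) * (b * (2*b+dd))) by ring.
      replace (x * m * b * (2 * b + dd)) with ((x * m) * (b * (2*b+dd))) by ring.
      apply Rmult_le_compat; nra. }
    assert (4 * b * (b * (3 * b + dd) * (2 * b + dd)) <= 4 * b * B) by (apply Rmult_le_compat_l; lra).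
    nra. }
  assert (0 <= x * (dd * ((dd - 1) * x + x * x + 2 * b) * B - x * b * m * (2 * b + dd)) / (b * m * (2 * b + dd) * B)).
  { apply Rdiv_le_0_compat. apply Rmult_le_pos; lra.
    repeat apply Rmult_lt_0_compat; lra. }
  fold m. lra.
Qed.

Lemma Gamma_P s n : 1 <= s -> Gamma (s + INR n) = Gamma s * P s n.
Proof.
  intros Hs. induction n.
  - simpl. rewrite Rplus_0_r. ring.
  - rewrite S_INR. replace (s + (INR n + 1)) with ((s + INR n) + 1) by ring.
    assert (Hn := pos_INR n).
    rewrite Gamma_succ by lra. rewrite IHn. simpl. ring.
Qed.

Lemma combine g0 gp gm pbd pxd pbN pxN pmN e1 e2 :
  0 < g0 -> 0 < gp -> 0 < gm -> 0 < pbd -> 0 < pxd -> 0 < pbN -> 0 < pxN -> 0 < pmN ->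
  0 < e1 -> 0 < e2 ->
  g0 * pbN * (g0 * pbN) <= gm * pmN * (gp * pxN) -> pmN * pxN <= pbN * pbN * e1 ->
  pbd <= pxd * e2 ->
  g0 * pbd * g0 / (gp * pxd * gm) <= e1 * e2.
Proof.
  intros. 
  assert (H12 : g0 * g0 * (pbN * pbN) <= (gm * gp * e1) * (pbN * pbN)).
  { apply Rle_trans with (gm * gp * (pmN * pxN)).
    - replace (g0 * g0 * (pbN * pbN)) with (g0 * pbN * (g0 * pbN)) by ring.
      replace (gm * gp * (pmN * pxN)) with (gm * pmN * (gp * pxN)) by ring. auto.
    - replace (gm * gp * e1 * (pbN * pbN)) with (gm * gp * (pbN * pbN * e1)) by ring.
      apply Rmult_le_compat_l; auto. apply Rmult_le_pos; lra. }
  apply Rmult_le_reg_r in H12; [|nra].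
  assert (Ha : g0 * g0 / (gp * gm) <= e1).
  { apply Rmult_le_reg_r with (gp * gm); [nra|].
    replace (g0 * g0 / (gp * gm) * (gp * gm)) with (g0 * g0) by (field; lra). nra. }
  assert (Hb : pbd / pxd <= e2).
  { apply Rmult_le_reg_r with pxd; auto.
    replace (pbd / pxd * pxd) with pbd by (field; lra). lra. }
  replace (g0 * pbd * g0 / (gp * pxd * gm)) with ((g0 * g0 / (gp * gm)) * (pbd / pxd)) by (field; lra).
  apply Rmult_le_compat; auto.
  - left; apply Rdiv_lt_0_compat; nra.
  - left; apply Rdiv_lt_0_compat; nra.
Qed.

Lemma part1 (d L : nat) (hd : (2 <= d)%nat) (hL : (1 <= L)%nat) x :
  0 <= x <= INR L - 1 ->
     0 < rho d L x /\
     rho d L x <= exp (- (2 * x * (x + INR d)) / (2 * INR L + INR d)).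
Proof.
  intros Hx.
  assert (Hb : 1 <= INR L) by (apply le_INR in hL; simpl in hL; lra).
  assert (Hd : 2 <= INR d) by (apply le_INR in hd; simpl in hd; lra).
  set (b := INR L) in *. set (dd := INR d) in *.
  unfold rho. fold b dd.
  destruct (Gamma_spec (b + dd) ltac:(lra)) as [_ G1].
  destruct (Gamma_spec b ltac:(lra)) as [_ G2].
  destruct (Gamma_spec (b + dd + x) ltac:(lra)) as [_ G3].
  destruct (Gamma_spec (b - x) ltac:(lra)) as [_ G4].
  split.
  { apply Rdiv_lt_0_compat; apply Rmult_lt_0_compat; auto. }
  set (N := (L * (3 * L + d) * (2 * L + d))%nat).
  assert (HN : INR N = b * (3 * b + dd) * (2 * b + dd)).
  { unfold N. rewrite !mult_INR, !plus_INR, !mult_INR. fold b dd. simpl. ring. }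
  set (nN := INR N) in *.
  assert (Ga := Gamma_P b d ltac:(lra)). fold dd in Ga.
  assert (Gax := Gamma_P (b + x) d ltac:(lra)). fold dd in Gax.
  replace (b + x + dd) with (b + dd + x) in Gax by ring.
  assert (GN := Gamma_P b N ltac:(lra)). fold nN in GN.
  assert (GxN := Gamma_P (b + x) N ltac:(lra)). fold nN in GxN.
  assert (GmN := Gamma_P (b - x) N ltac:(lra)). fold nN in GmN.
  assert (HnN : 0 <= nN) by (unfold nN; apply pos_INR).
  assert (Mid := Gamma_mid (b + nN) x ltac:(lra) ltac:(lra)).
  replace (b + nN - x) with (b - x + nN) in Mid by ring.
  replace (b + nN + x) with (b + x + nN) in Mid by ring.
  rewrite GN, GxN, GmN in Mid.
  rewrite Ga, Gax.
  assert (LN := L_N b x N ltac:(lra)).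
  assert (Ld := L_d b x d ltac:(lra) ltac:(lra)).
  destruct (Gamma_spec (b + x) ltac:(lra)) as [_ G5].
  assert (Hc := combine (Gamma b) (Gamma (b + x)) (Gamma (b - x)) (P b d) (P (b + x) d)
      (P b N) (P (b + x) N) (P (b - x) N) (exp (- (x * x * S2 b N))) (exp (- S1 b x d))
      G2 G5 G4 (P_pos b d ltac:(lra)) (P_pos (b + x) d ltac:(lra)) (P_pos b N ltac:(lra))
      (P_pos (b + x) N ltac:(lra)) (P_pos (b - x) N ltac:(lra)) (exp_pos _) (exp_pos _)).
  replace (Gamma b * P b d * Gamma b / (Gamma (b + x) * P (b + x) d * Gamma (b - x)))
    with (Gamma b * P b d * Gamma b / (Gamma (b + x) * P (b + x) d * Gamma (b - x))) by reflexivity.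
  eapply Rle_trans.
  { replace (Gamma b * P b d * Gamma b / (Gamma (b + x) * P (b + x) d * (Gamma (b - x))))
      with (Gamma b * P b d * Gamma b / (Gamma (b + x) * P (b + x) d * Gamma (b - x))) by reflexivity.
    apply Hc; auto. }
  rewrite <- exp_plus.
  set (m := 2 * b + x + dd - 1).
  assert (Hm : 0 < m) by (unfold m; lra).
  assert (HS1 := S1_ge b x m d ltac:(lra) ltac:(lra) Hm). fold dd in HS1.
  replace (2 * x * (2 * dd / m - (dd * (2 * b + x) + dd * (dd - 1)) / (m * m)))
    with (2 * x * dd / m) in HS1 by (unfold m; field; lra).
  assert (HS2 := S2_ge b N ltac:(lra)). fold nN in HS2.
  assert (Hf := final_ineq b dd x (b + nN) Hb Hd Hx ltac:(lra)). fold m in Hf.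
  assert (H22 : x * x * (/ b - / (b + nN)) <= x * x * S2 b N).
  { apply Rmult_le_compat_l; [nra|lra]. }
  assert (Hexp : - (x * x * S2 b N) + - S1 b x d <= - (2 * x * (x + dd)) / (2 * b + dd)).
  { replace (- (2 * x * (x + dd)) / (2 * b + dd)) with (- (2 * x * (x + dd) / (2 * b + dd))) by (field; lra).
    lra. }
  destruct Hexp as [Hexp|Hexp]; [left; apply exp_increasing; auto| rewrite Hexp; lra].
Qed.

Lemma Gamma_fact n : Gamma (INR n + 1) = INR (fact n) * Gamma 1.
Proof.
  induction n.
  - replace (INR 0 + 1) with 1 by (simpl; ring). simpl. ring.
  - rewrite S_INR. assert (Hn := pos_INR n).
    rewrite Gamma_succ by lra. rewrite IHn.
    change (fact (S n)) with (S n * fact n)%nat. rewrite mult_INR, S_INR. ring.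
Qed.

Lemma fact_Gamma n y : INR n + 1 = y -> INR (fact n) = Gamma y / Gamma 1.
Proof.
  intros <-. rewrite Gamma_fact. destruct (Gamma_spec 1 ltac:(lra)) as [_ G].
  field. lra.
Qed.

Theorem mainTheorem6 (d L : nat) (hd : (2 <= d)%nat) (hL : (1 <= L)%nat) :
  (forall x : R, 0 <= x <= INR L - 1 ->
     0 < rho d L x /\
     rho d L x <= exp (- (2 * x * (x + INR d)) / (2 * INR L + INR d))) /\
  (forall k : nat, (k <= L - 1)%nat ->
     INR (fact (L - 1 + d)) * INR (fact (L - 1))
       / (INR (fact (L - 1 + d + k)) * INR (fact (L - 1 - k)))
     <= exp (- (2 * INR k * (INR k + INR d)) / (2 * INR L + INR d))).
Proof.
  split.
  - intros x Hx. apply part1; auto.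
  - intros k Hk.
    assert (Hb : 1 <= INR L) by (apply le_INR in hL; simpl in hL; lra).
    assert (Hkb : INR k <= INR L - 1).
    { apply le_INR in Hk. rewrite minus_INR in Hk by auto. simpl in Hk. lra. }
    assert (Hk0 := pos_INR k).
    destruct (part1 d L hd hL (INR k) ltac:(lra)) as [_ H].
    unfold rho in H.
    rewrite (fact_Gamma (L - 1 + d) (INR L + INR d)).
    2:{ rewrite plus_INR, minus_INR by auto. simpl. ring. }
    rewrite (fact_Gamma (L - 1) (INR L)).
    2:{ rewrite minus_INR by auto. simpl. ring. }
    rewrite (fact_Gamma (L - 1 + d + k) (INR L + INR d + INR k)).
    2:{ rewrite !plus_INR, minus_INR by auto. simpl. ring. }
    rewrite (fact_Gamma (L - 1 - k) (INR L - INR k)).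
    2:{ rewrite !minus_INR by (auto; lia). simpl. ring. }
    destruct (Gamma_spec 1 ltac:(lra)) as [_ G1].
    destruct (Gamma_spec (INR L + INR d + INR k) ltac:(assert (0 <= INR d) by apply pos_INR; lra)) as [_ G3].
    destruct (Gamma_spec (INR L - INR k) ltac:(lra)) as [_ G4].
    eapply Rle_trans; [|exact H]. right. field. repeat split; lra.
Qed.
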